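(* Let $P$ be a Poisson tensor on $\mathbb{R}^3$, let $H\in C^\infty(\mathbb{R}^3)$, let $S\in C^\infty(\mathbb{R}^3)$ satisfy $PdS=0$, and let $g$ be the symmetric tensor with components $g^{ij}=H^iH^j-\delta^{ij}\sum_k H^kH^k$. Define the vector fields $\xi_P=PdH$ and $\xi=PdH+gdS$. Then at every regular point $x$ of $P$ (i.e. every $x$ with $P(x)\neq 0$), $\xi_P(x)=0$ if and only if $\xi(x)=0$.
   Context: $\mathbb{R}^3$ carries the standard Euclidean metric, used to identify tangent and cotangent spaces with $\mathbb{R}^3$; $H^i=H_i=\partial H/\partial x^i$ in standard coordinates. A Poisson tensor is a skew-symmetric bivector field satisfying the Jacobi identity; a point $x$ is regular for $P$ if the rank of $P$ at $x$ is maximal, which in $\mathbb{R}^3$ means $P(x)\neq 0$. *)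

(* Defs.v *)
From HB Require Import structures.
From mathcomp Require Import all_boot all_order all_algebra.
From mathcomp Require Import all_classical all_reals all_analysis.
Set Implicit Arguments. Unset Strict Implicit. Unset Printing Implicit Defensive.
Import Order.TTheory GRing.Theory Num.Theory.
Import numFieldNormedType.Exports.
Local Open Scope ring_scope.

Section Defs.
Variable R : realType.
Notation pt := 'rV[R]_3.

Definition e3 (i : 'I_3) : pt := delta_mx 0 i.

Definition partial (i : 'I_3) (f : pt -> R) : pt -> R :=
  fun x => 'D_(e3 i) f x.

Fixpoint iter_partial (l : seq 'I_3) (f : pt -> R) : pt -> R :=
  match l with
  | [::] => f
  | i :: l' => partial i (iter_partial l' f)
  end.

Definition smooth (f : pt -> R) : Prop :=
  forall l : seq 'I_3,
    continuous (iter_partial l f) /\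
    forall (i : 'I_3) (x : pt), derivable (iter_partial l f) x (e3 i).

Definition poisson_tensor (P : 'I_3 -> 'I_3 -> pt -> R) : Prop :=
  (forall i j, smooth (P i j)) /\
  (forall i j x, P i j x = - P j i x) /\
  (forall i j k x,
     \sum_(l < 3) (P i l x * partial l (P j k) x
                  + P j l x * partial l (P k i) x
                  + P k l x * partial l (P i j) x) = 0).

Definition bivec_d (P : 'I_3 -> 'I_3 -> pt -> R) (F : pt -> R) (x : pt) : 'rV[R]_3 :=
  \row_(i < 3) \sum_(j < 3) P i j x * partial j F x.

Definition gH (H : pt -> R) (i j : 'I_3) (x : pt) : R :=
  partial i H x * partial j H x
  - (i == j)%:R * \sum_(k < 3) partial k H x * partial k H x.

Definition regular_point (P : 'I_3 -> 'I_3 -> pt -> R) (x : pt) : Prop :=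
  exists i j, P i j x <> 0.

End Defs.

(* Main.v *)
Require Import Defs.
From HB Require Import structures.
From mathcomp Require Import all_boot all_order all_algebra.
From mathcomp Require Import all_classical all_reals all_analysis.
From mathcomp Require Import ring lra.
Import Order.TTheory GRing.Theory Num.Theory.
Import numFieldNormedType.Exports.
Local Open Scope ring_scope.

Lemma sum3 (R : realType) (F : 'I_3 -> R) : \sum_(j < 3) F j = F 0 + F 1 + F 2.
Proof.
rewrite !big_ord_recr big_ord0 /= add0r.
congr (F _ + F _ + F _); exact: val_inj.
Qed.

Lemma row3_eq0 (R : realType) (v : 'rV[R]_3) :
  v = 0 <-> v 0 0 = 0 /\ v 0 1 = 0 /\ v 0 2 = 0.
Proof.
split; first by move=> ->; rewrite !mxE.
move=> [h0 [h1 h2]]; apply/rowP => i; rewrite mxE.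
have -> : (0 : 'I_1) = ord0 by exact: val_inj.
case: i => [[|[|[|k]]] Hi] //.
- by rewrite -h0; congr (v _ _); exact: val_inj.
- by rewrite -h1; congr (v _ _); exact: val_inj.
- by rewrite -h2; congr (v _ _); exact: val_inj.
Qed.

Lemma par (R : realType) (a b c s0 s1 s2 : R) :
  (a != 0 \/ b != 0 \/ c != 0) ->
  a*s1+b*s2=0 -> -a*s0+c*s2=0 -> -b*s0-c*s1=0 ->
  exists l, s0 = -l*c /\ s1 = l*b /\ s2 = -l*a.
Proof.
move=> [Ha|[Hb|Hc]] e1 e2 e3.
- exists (-s2/a); split; [|split]; apply: (mulfI Ha).
  + rewrite [RHS](_ : a * _ = c*s2); [lra | field => //].
  + rewrite [RHS](_ : a * (_ * b) = -s2*b); [lra | field => //].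
  + rewrite [RHS](_ : a * (_ * a) = a*s2); [lra | field => //].
- exists (s1/b); split; [|split]; apply: (mulfI Hb).
  + rewrite [RHS](_ : b * _ = -s1*c); [lra | field => //].
  + rewrite [RHS](_ : b * (_ * b) = b*s1); [lra | field => //].
  + rewrite [RHS](_ : b * (_ * a) = -s1*a); [lra | field => //].
- exists (-s0/c); split; [|split]; apply: (mulfI Hc).
  + rewrite [RHS](_ : c * (_ * c) = c*s0); [lra | field => //].
  + rewrite [RHS](_ : c * (_ * b) = -s0*b); [lra | field => //].
  + rewrite [RHS](_ : c * (_ * a) = s0*a); [lra | field => //].
Qed.

Lemma alg (R : realType) (a b c s0 s1 s2 h0 h1 h2 : R) :
  (a != 0 \/ b != 0 \/ c != 0) ->
  a*s1+b*s2=0 -> -a*s0+c*s2=0 -> -b*s0-c*s1=0 ->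
  let v0 := a*h1+b*h2 in let v1 := -a*h0+c*h2 in let v2 := -b*h0-c*h1 in
  let q := h0*s0+h1*s1+h2*s2 in let n := h0*h0+h1*h1+h2*h2 in
  (v0 = 0 /\ v1 = 0 /\ v2 = 0 <->
   v0 + (h0*q - n*s0) = 0 /\ v1 + (h1*q - n*s1) = 0 /\ v2 + (h2*q - n*s2) = 0).
Proof.
move=> Hp e1 e2 e3 v0 v1 v2 q n.
have [l [E0 [E1 E2]]] := @par _ _ _ _ _ _ _ Hp e1 e2 e3.
rewrite /v0 /v1 /v2 /q /n E0 E1 E2.
split.
- move=> [f1 [f2 f3]].
  have [m [F0 [F1 F2]]] := @par _ _ _ _ _ _ _ Hp f1 f2 f3.
  rewrite F0 F1 F2; split; [|split]; ring.
- move=> [f1 [f2 f3]].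
  set w0 := a*h1+b*h2 in f1 *; set w1 := -a*h0+c*h2 in f2 *; set w2 := -b*h0-c*h1 in f3 *.
  have key : w0*w0 + w1*w1 + w2*w2 = 0.
    have -> : w0*w0 + w1*w1 + w2*w2 =
      w0 * (w0 + (h0 * (h0 * (- l * c) + h1 * (l * b) + h2 * (- l * a)) -
             (h0 * h0 + h1 * h1 + h2 * h2) * (- l * c)))
    + w1 * (w1 + (h1 * (h0 * (- l * c) + h1 * (l * b) + h2 * (- l * a)) -
             (h0 * h0 + h1 * h1 + h2 * h2) * (l * b)))
    + w2 * (w2 + (h2 * (h0 * (- l * c) + h1 * (l * b) + h2 * (- l * a)) -
             (h0 * h0 + h1 * h1 + h2 * h2) * (- l * a))).
      rewrite /w0 /w1 /w2; ring.
    by rewrite f1 f2 f3 !mulr0 !addr0.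
  split; [|split]; nra.
Qed.

Lemma ord3 (i : 'I_3) : i = 0 \/ i = 1 \/ i = 2.
Proof.
case: i => [[|[|[|k]]] Hi] //.
- by left; exact: val_inj.
- by right; left; exact: val_inj.
- by right; right; exact: val_inj.
Qed.

Theorem mainTheorem3 (R : realType) (P : 'I_3 -> 'I_3 -> 'rV[R]_3 -> R)
  (H S : 'rV[R]_3 -> R) :
  poisson_tensor P -> smooth H -> smooth S ->
  (forall x, bivec_d P S x = 0) ->
  forall x : 'rV[R]_3, regular_point P x ->
    (bivec_d P H x = 0 <-> bivec_d P H x + bivec_d (gH H) S x = 0).
Proof.
move=> [_ [hs _]] _ _ hS x [i [j hij]].
have hd : forall k, P k k x = 0 by move=> k; have := hs k k x; lra.
have Hp : P 0 1 x != 0 \/ P 0 2 x != 0 \/ P 1 2 x != 0.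
  case: (boolP (P 0 1 x != 0)) => [?|/negPn/eqP h1]; first by left.
  case: (boolP (P 0 2 x != 0)) => [?|/negPn/eqP h2]; first by right; left.
  case: (boolP (P 1 2 x != 0)) => [?|/negPn/eqP h3]; first by right; right.
  exfalso; apply: hij.
  case: (ord3 i) => [->|[->|->]]; case: (ord3 j) => [->|[->|->]];
    rewrite ?hd // ?h1 ?h2 ?h3 // hs ?h1 ?h2 ?h3 oppr0 //.
have := hS x; rewrite !row3_eq0 /bivec_d /gH !mxE !sum3.
rewrite !hd (hs 1 0) (hs 2 0) (hs 2 1) /=.
move=> [e1 [e2 e3]].
move: Hp e1 e2 e3.
generalize (P 0 1 x) (P 0 2 x) (P 1 2 x) (partial 0 H x) (partial 1 H x) (partial 2 H x)
  (partial 0 S x) (partial 1 S x) (partial 2 S x).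
move=> a b c h0 h1 h2 s0 s1 s2 Hp e1 e2 e3.
have e1' : a*s1+b*s2=0 by lra.
have e2' : -a*s0+c*s2=0 by lra.
have e3' : -b*s0-c*s1=0 by lra.
have /= [A B] := @alg R a b c s0 s1 s2 h0 h1 h2 Hp e1' e2' e3'.
split.
- move=> [f1 [f2 f3]].
  have [|g1 [g2 g3]] := A; first by split; [|split]; lra.
  by split; [|split]; lra.
- move=> [f1 [f2 f3]].
  have [|g1 [g2 g3]] := B; first by split; [|split]; lra.
  by split; [|split]; lra.
Qed.
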